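(* Let $\Omega$ be either a Segre variety $\mathcal{S}_{\ell,k}(\mathbb{K})$ with $\ell\le3$, $k\ge1$, or one of the line Grassmannians $\mathcal{G}_{5,2}(\mathbb{K})$, $\mathcal{G}_{6,2}(\mathbb{K})$, viewed in the projective space it spans. Then the only subspace of $\langle\Omega\rangle$ which is legal with respect to $\Omega$ is the empty subspace; i.e. $\Omega$ admits no proper legal projection.
   Context: Let $\Omega$ be a Segre variety $\mathcal{S}_{\ell,k}(\mathbb{K})$ (image of the Segre map, i.e. the rank-one $(\ell+1)\times(k+1)$ matrices up to scalars) or a line Grassmannian $\mathcal{G}_{n+1,2}(\mathbb{K})$ (Plücker image of the lines of $\mathbb{P}^n(\mathbb{K})$), with point set $X$; two points are collinear if the line joining them lies in $X$. Let $\Xi$ be the set of subspaces spanned by the convex closures (in $X$) of pairs of non-collinear points at distance 2 (these are grids, resp. Klein quadrics). A subspace $S$ of $\langle X\rangle$ is legal with respect to $\Omega$ if $S$ is disjoint from $\langle\xi_1,\xi_2\rangle$ for all $\xi_1,\xi_2\in\Xi$; a legal projection is a projection from a legal subspace onto a complementary subspace, and it is proper if the subspace is non-empty. *)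

(* Defs.v *)
From HB Require Import structures.
From mathcomp Require Import all_boot all_order all_algebra.
Set Implicit Arguments. Unset Strict Implicit. Unset Printing Implicit Defensive.
Import GRing.Theory.
Local Open Scope ring_scope.

(* Point-line geometry of a "variety" given by its cone X of nonzero vectors
   (a point of the projective space = a nonzero vector up to scalars). *)
Section Geometry.
Variables (K : fieldType) (N : nat).
Notation V := 'rV[K]_N.
Variable X : V -> Prop.

Definition collinear (x y : V) : Prop :=
  X x /\ X y /\ forall a b : K, a *: x + b *: y != 0 -> X (a *: x + b *: y).

Fixpoint is_path (x : V) (s : seq V) : Prop :=
  if s is y :: s' then collinear x y /\ is_path y s' else True.

Definition dist_le (x y : V) (n : nat) : Prop :=
  exists s : seq V, [/\ size s = n, is_path x s & last x s = y].

Definition shortest_path (x y : V) (s : seq V) : Prop :=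
  [/\ is_path x s, last x s = y & forall m, (m < size s)%N -> ~ dist_le x y m].

Definition dist2 (x y : V) : Prop :=
  [/\ X x, X y, ~ collinear x y & exists z, collinear x z /\ collinear z y].

Definition convex_subspace (C : V -> Prop) : Prop :=
  [/\ (forall x, C x -> X x),
      (forall x y, C x -> C y -> collinear x y ->
         forall a b : K, a *: x + b *: y != 0 -> C (a *: x + b *: y))
    & (forall x y s, C x -> C y -> shortest_path x y s ->
         forall z, z \in s -> C z)].

Definition convex_closure (p q : V) : V -> Prop :=
  fun v => forall C, convex_subspace C -> C p -> C q -> C v.

Definition in_span (A : V -> Prop) (v : V) : Prop :=
  exists n (w : 'I_n -> V) (c : 'I_n -> K),
    (forall i, A (w i)) /\ v = \sum_(i < n) c i *: w i.

(* the linear subspace (row space of) S is legal w.r.t. X: it meets no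
   <xi1, xi2> with xi1, xi2 in Xi *)
Definition legal (S : 'M[K]_N) : Prop :=
  forall p1 q1 p2 q2, dist2 p1 q1 -> dist2 p2 q2 ->
  forall v : V, (v <= S)%MS ->
    in_span (fun w => convex_closure p1 q1 w \/ convex_closure p2 q2 w) v ->
    v = 0.

End Geometry.

(* Segre variety S_{l,k}(K): rank-one (l+1)x(k+1) matrices, vectorized *)
Definition segre (K : fieldType) (l k : nat) : 'rV[K]_(l.+1 * k.+1) -> Prop :=
  fun v => \rank (vec_mx v : 'M[K]_(l.+1, k.+1)) = 1%N.

(* Line Grassmannian G_{m,2}(K) (lines of P^{m-1}(K)): Plücker image, the
   Plücker vector of the line <u,w> being realized as the skew matrix
   u^T w - w^T u (entry (i,j) = u_i w_j - u_j w_i), vectorized *)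
Definition grass (K : fieldType) (m : nat) : 'rV[K]_(m * m) -> Prop :=
  fun v => exists u w : 'rV[K]_m,
    (u^T *m w - w^T *m u != 0) /\ vec_mx v = u^T *m w - w^T *m u.

(* Main.v *)
Require Import Defs.
From mathcomp Require Import all_boot all_order all_algebra.
From mathcomp Require Import ring zify.
From Stdlib Require Import Classical.
Set Implicit Arguments. Unset Strict Implicit. Unset Printing Implicit Defensive.
Import GRing.Theory.
Local Open Scope ring_scope.


Section Gen.
Variables (K : fieldType) (N : nat).
Notation V := 'rV[K]_N.
Variable X : V -> Prop.

Definition sc := forall (x : V) (a : K), X x -> a != 0 -> X (a *: x).

Lemma col_sym x y : collinear X x y -> collinear X y x.
Proof. by move=> [Hx [Hy H]]; split=> // ; split=> // a b; rewrite addrC => /H; rewrite addrC. Qed.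

Lemma col_neg x y : sc -> collinear X x y -> collinear X (- x) y.
Proof.
move=> Hs [Hx [Hy H]]; split; last split=> //.
  by rewrite -scaleN1r; apply: Hs => //; rewrite oppr_eq0 oner_eq0.
by move=> a b; rewrite scalerN -scaleNr; apply: H.
Qed.

Lemma col_refl x : sc -> X x -> collinear X x x.
Proof.
move=> Hs Hx; split=> //; split=> // a b; rewrite -scalerDl => Hn.
apply: Hs => //; apply/eqP => H0; move: Hn; by rewrite H0 scale0r eqxx.
Qed.

Lemma col_lin (W : Type) (F : W -> V)
  (lin : forall (a b : K) x y, exists z, a *: F x + b *: F y = F z)
  (HX : forall z, F z != 0 -> X (F z)) x y :
  F x != 0 -> F y != 0 -> collinear X (F x) (F y).
Proof.
move=> Hx Hy; split; first exact: HX.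
split; first exact: HX.
move=> a b; have [z ->] := lin a b x y; exact: HX.
Qed.

Lemma clos_mid p q z : sc -> ~ collinear X p q -> collinear X p z -> collinear X z q ->
  dist2 X p q /\ convex_closure X p q z.
Proof.
move=> Hs Hpq Hpz Hzq; split.
  split; [by case: Hpz | by case: Hzq => _ [] | by [] | by exists z].
move=> C [_ _ Hsp] Cp Cq.
apply: (Hsp p q [:: z; q]) => //; last by rewrite inE eqxx.
split=> //.
move=> m; rewrite /= => Hm [s [Hsz Hpath Hl]].
case: m Hm Hsz => [|[|//]] _.
  move=> /size0nil Hs0; move: Hl; rewrite Hs0 /= => Epq.
  by apply: Hpq; rewrite -Epq; apply: col_refl => //; case: Hpz.
case: s Hpath Hl => [//|y [|//]] /= [Hpy _] Hy _.
by apply: Hpq; rewrite -Hy.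
Qed.



Lemma in_span_seq (A : V -> Prop) (s : seq (K * V)) :
  (forall x, x \in s -> A x.2) -> in_span A (\sum_(x <- s) x.1 *: x.2).
Proof.
move=> Hs; exists (size s), (fun i => (nth (0, 0) s i).2), (fun i => (nth (0,0) s i).1).
split; first by move=> i; apply: Hs; rewrite mem_nth.
by rewrite (big_nth (0,0)) big_mkord.
Qed.

Lemma legal_zero (S : 'M[K]_N) :
  (forall v, (v <= S)%MS -> exists p1 q1 p2 q2, [/\ dist2 X p1 q1, dist2 X p2 q2 &
     in_span (fun w => convex_closure X p1 q1 w \/ convex_closure X p2 q2 w) v]) ->
  legal X S -> S = 0.
Proof.
move=> H HL; apply/row_matrixP => i; rewrite row0.
have [p1 [q1 [p2 [q2 [H1 H2 H3]]]]] := H _ (row_sub i S).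
exact: (HL p1 q1 p2 q2 H1 H2 _ (row_sub i S) H3).
Qed.

End Gen.

Definition gridrep (K : fieldType) (N : nat) (X : 'rV[K]_N -> Prop) (v : 'rV[K]_N) :=
  exists p q (s : seq (K * 'rV[K]_N)), [/\ dist2 X p q,
    (forall x, x \in s -> convex_closure X p q x.2) & v = \sum_(x <- s) x.1 *: x.2].

Lemma combine (K : fieldType) (N : nat) (X : 'rV[K]_N -> Prop) v1 v2 :
  gridrep X v1 -> gridrep X v2 -> exists p1 q1 p2 q2, [/\ dist2 X p1 q1, dist2 X p2 q2 &
     in_span (fun w => convex_closure X p1 q1 w \/ convex_closure X p2 q2 w) (v1 + v2)].
Proof.
move=> [p1 [q1 [s1 [D1 H1 ->]]]] [p2 [q2 [s2 [D2 H2 ->]]]].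
exists p1, q1, p2, q2; split => //.
rewrite -big_cat; apply: in_span_seq => x; rewrite mem_cat => /orP [/H1|/H2]; tauto.
Qed.


Section Lin.
Variables (K : fieldType) (n : nat).
Notation V := 'rV[K]_n.

Definition indep (a b : V) := forall x y : K, x *: a + y *: b = 0 -> x = 0 /\ y = 0.

Lemma indep_nz1 a b : indep a b -> a != 0.
Proof.
move=> H; apply/eqP => a0; have [] := H 1 0; first by rewrite a0 scaler0 scale0r addr0.
by move/eqP; rewrite oner_eq0.
Qed.

Lemma indep_sym a b : indep a b -> indep b a.
Proof. by move=> H x y; rewrite addrC => /H [] -> ->. Qed.

Lemma indep_nz2 a b : indep a b -> b != 0.
Proof. by move/indep_sym/indep_nz1. Qed.

Lemma not_indep a b : ~ indep a b -> exists x y : K, x *: a + y *: b = 0 /\ (x != 0 \/ y != 0).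
Proof.
move=> H; apply: NNPP => H2; apply: H => x y Hxy.
case: (eqVneq x 0) => Hx; case: (eqVneq y 0) => Hy //;
  by exfalso; apply: H2; exists x, y; split => //; tauto.
Qed.

Lemma dep_mult c d : c != 0 -> ~ indep c d -> exists g, d = g *: c.
Proof.
move=> Hc /not_indep [x [y [E Hxy]]].
have Hy : y != 0.
  apply/eqP => y0; move: E; rewrite y0 scale0r addr0 => /eqP; rewrite scaler_eq0.
  case: Hxy => [/negPf -> /=|]; first by rewrite (negPf Hc).
  by rewrite y0 eqxx.
exists (- x / y); apply: (scalerI Hy); rewrite scalerA mulrCA mulfV // mulr1.
by rewrite scaleNr; apply/eqP; rewrite -addr_eq0 addrC E.
Qed.

Lemma lemL (P : V -> Prop) (x0 x1 w1 w2 : V) :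
  (forall v (a : K), P v -> P (a *: v)) -> P x0 -> P x1 -> P w1 -> P w2 ->
  indep x0 x1 ->
  exists a b (al1 be1 al2 be2 : K), [/\ indep a b, P a, P b,
     w1 = al1 *: a + be1 *: b & w2 = al2 *: a + be2 *: b].
Proof.
move=> PS P0 P1 Pw1 Pw2 I01.
case: (classic (indep w1 w2)) => Hw.
  exists w1, w2, 1, 0, 0, 1; split => //; by rewrite ?scale1r ?scale0r ?addr0 ?add0r.
have [c [s1 [s2 [Pc E1 E2]]]] : exists c (s1 s2 : K), [/\ P c, w1 = s1 *: c & w2 = s2 *: c].
  case: (eqVneq w1 0) => H1.
    exists w2, 0, 1; split => //; by rewrite ?scale1r ?scale0r.
  have [g Eg] := dep_mult H1 Hw.
  by exists w1, 1, g; rewrite scale1r.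
case: (eqVneq c 0) => Hc.
  exists x0, x1, 0, 0, 0, 0; split => //; by rewrite ?E1 ?E2 Hc !scaler0 !scale0r addr0.
case: (classic (indep c x0)) => H0.
  exists c, x0, s1, 0, s2, 0; split => //; by rewrite scale0r addr0.
case: (classic (indep c x1)) => H1.
  exists c, x1, s1, 0, s2, 0; split => //; by rewrite scale0r addr0.
exfalso.
have [g0 E0] := dep_mult Hc H0; have [g1 E1'] := dep_mult Hc H1.
have Hg0 : g0 != 0 by apply/eqP => g00; move: (indep_nz1 I01); rewrite E0 g00 scale0r eqxx.
have [] := I01 g1 (- g0).
  rewrite E0 E1' !scalerA -scalerDl.
  have -> : g1 * g0 + - g0 * g1 = 0 by ring.
  by rewrite scale0r.
by move=> _ /eqP; rewrite oppr_eq0 (negPf Hg0).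
Qed.

Lemma minor_nz (g h : V) : indep g h -> exists i j, g 0 i * h 0 j - g 0 j * h 0 i != 0.
Proof.
move=> I; apply: NNPP => H.
have /rV0Pn [i Hi] := indep_nz1 I.
have HH : h 0 i *: g + (- g 0 i) *: h = 0.
  apply/rowP => j; rewrite !mxE.
  have : ~ (g 0 i * h 0 j - g 0 j * h 0 i != 0) by move=> Hn; apply: H; exists i, j.
  move/negP; rewrite negbK => /eqP E.
  have -> : h 0 i * g 0 j + - g 0 i * h 0 j = - (g 0 i * h 0 j - g 0 j * h 0 i) by ring.
  by rewrite E oppr0.
have [_] := I _ _ HH.
by move/eqP; rewrite oppr_eq0 (negPf Hi).
Qed.

End Lin.


Definition outer (K : fieldType) m n (x : 'rV[K]_m) (c : 'rV[K]_n) : 'M[K]_(m,n) :=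
  \matrix_(i, j) (x 0 i * c 0 j).

Section Segre.
Variable K : fieldType.

Lemma outerE m n (x : 'rV[K]_m) (c : 'rV[K]_n) : outer x c = x^T *m c.
Proof. by apply/matrixP => i j; rewrite !mxE big_ord1 !mxE. Qed.

Lemma outer_nz m n (x : 'rV[K]_m) (c : 'rV[K]_n) : x != 0 -> c != 0 -> outer x c != 0.
Proof.
move=> /rV0Pn [i Hi] /rV0Pn [j Hj]; apply/eqP => /matrixP /(_ i j); rewrite !mxE.
by move/eqP; rewrite mulf_eq0 (negPf Hi) (negPf Hj).
Qed.

Lemma segre_outer l k (x : 'rV[K]_l.+1) (c : 'rV[K]_k.+1) :
  outer x c != 0 -> @segre K l k (mxvec (outer x c)).
Proof.
move=> Hn; rewrite /segre mxvecK; apply/eqP; rewrite eqn_leq; apply/andP; split.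
  by rewrite outerE; apply: leq_trans (mxrankM_maxl _ _) (rank_leq_col _).
by rewrite lt0n mxrank_eq0.
Qed.

Lemma segre_sc l k : sc (@segre K l k).
Proof.
move=> x a; rewrite /segre linearZ /= => Hx Ha.
by rewrite (eqmx_scale _ Ha).
Qed.

Lemma mxvec_nz m n (M : 'M[K]_(m, n)) : M != 0 -> mxvec M != 0.
Proof. by apply: contra => /eqP H; apply/eqP; rewrite -[M]mxvecK H linear0. Qed.

Lemma col_outer_l l k (x : 'rV[K]_l.+1) (c1 c2 : 'rV[K]_k.+1) :
  outer x c1 != 0 -> outer x c2 != 0 ->
  collinear (@segre K l k) (mxvec (outer x c1)) (mxvec (outer x c2)).
Proof.
move=> H1 H2.
apply: (@col_lin _ _ _ _ (fun c => mxvec (outer x c))); try exact: mxvec_nz.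
  move=> a b y z; exists (a *: y + b *: z).
  rewrite -!linearZ -linearD /=; congr mxvec; apply/matrixP => i j; rewrite !mxE; ring.
by move=> z Hz; apply: segre_outer; apply: contra Hz => /eqP ->; rewrite linear0.
Qed.

Lemma col_outer_r l k (x1 x2 : 'rV[K]_l.+1) (c : 'rV[K]_k.+1) :
  outer x1 c != 0 -> outer x2 c != 0 ->
  collinear (@segre K l k) (mxvec (outer x1 c)) (mxvec (outer x2 c)).
Proof.
move=> H1 H2.
apply: (@col_lin _ _ _ _ (fun x => mxvec (outer x c))); try exact: mxvec_nz.
  move=> a b y z; exists (a *: y + b *: z).
  rewrite -!linearZ -linearD /=; congr mxvec; apply/matrixP => i j; rewrite !mxE; ring.
by move=> z Hz; apply: segre_outer; apply: contra Hz => /eqP ->; rewrite linear0.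
Qed.

Lemma not_rank1 m n (Z : 'M[K]_(m, n)) i j : indep (row i Z) (row j Z) -> \rank Z != 1%N.
Proof.
move=> I; apply/eqP => HZ.
have Ha := indep_nz1 I.
have Hs := mxrank_leqif_sup (row_sub i Z).

have HZa : (Z <= row i Z)%MS.
  by rewrite -(Hs.2) rank_rV Ha HZ.
have /sub_rVP [g Hg] : (row j Z <= row i Z)%MS := submx_trans (row_sub j Z) HZa.
have HH : g *: row i Z + (-1) *: row j Z = 0 by rewrite Hg scaleN1r subrr.
have [_] := I _ _ HH.
by move/eqP; rewrite oppr_eq0 oner_eq0.
Qed.

Lemma delta_nz n (i : 'I_n) : delta_mx 0 i != 0 :> 'rV[K]_n.
Proof. by apply/eqP => /matrixP /(_ 0 i); rewrite !mxE !eqxx /= => /eqP; rewrite oner_eq0. Qed.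

Lemma indep_delta n (r s : 'I_n) : r != s -> indep (delta_mx 0 r : 'rV[K]_n) (delta_mx 0 s).
Proof.
move=> Hrs x y /matrixP E; split.
  by move: (E 0 r); rewrite !mxE !eqxx (negPf Hrs) /=; rewrite mulr1 mulr0 addr0.
by move: (E 0 s); rewrite !mxE !eqxx eq_sym (negPf Hrs) /=; rewrite mulr1 mulr0 add0r.
Qed.

Lemma segre_grid l k (i j : 'I_l.+1) (w1 w2 : 'rV[K]_k.+1) : i != j -> (1 <= k)%N ->
  gridrep (@segre K l k) (mxvec (outer (delta_mx 0 i) w1 + outer (delta_mx 0 j) w2)).
Proof.
move=> Hij Hk.
have H1 : (1 < k.+1)%N by [].
have I01 : indep (delta_mx 0 0 : 'rV[K]_k.+1) (delta_mx 0 (Ordinal H1)) by apply: indep_delta.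
have [a [b [al1 [be1 [al2 [be2 [Iab _ _ E1 E2]]]]]]] :=
  @lemL K k.+1 (fun _ => True) _ _ w1 w2 (fun _ _ _ => I) I I I I I01.
have Ha := indep_nz1 Iab; have Hb := indep_nz2 Iab.
have Hi := delta_nz i; have Hj := delta_nz j.
set ei := delta_mx 0 i : 'rV[K]_l.+1; set ej := delta_mx 0 j : 'rV[K]_l.+1.
set p := mxvec (outer ei a); set q := mxvec (outer ej b).
have Hpq : ~ collinear (@segre K l k) p q.
  move=> [_ [_ H]].
  set Z := outer ei a + outer ej b.
  have Ri : row i Z = a by apply/rowP => c; rewrite !mxE !eqxx (negPf Hij) /=; ring.
  have Rj : row j Z = b by apply/rowP => c; rewrite !mxE !eqxx eq_sym (negPf Hij) /=; ring.
  have Epq : p + q = mxvec Z by rewrite /p /q -linearD.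
  have HZ : Z != 0 by apply/eqP => Z0; move: Ha; rewrite -Ri Z0 row0 eqxx.
  have := H 1 1; rewrite !scale1r Epq => /(_ (mxvec_nz HZ)).
  rewrite /segre mxvecK => /eqP; apply/negP; apply: (not_rank1 (i := i) (j := j)).
  by rewrite Ri Rj.
have Cp1 := col_outer_l (outer_nz Hi Ha) (outer_nz Hi Hb).
have Cp2 := col_outer_r (outer_nz Hi Ha) (outer_nz Hj Ha).
have Cq1 := col_outer_r (outer_nz Hi Hb) (outer_nz Hj Hb).
have Cq2 := col_outer_l (outer_nz Hj Ha) (outer_nz Hj Hb).
have [D C1] := clos_mid (@segre_sc l k) Hpq Cp1 Cq1.
have [_ C2] := clos_mid (@segre_sc l k) Hpq Cp2 Cq2.
exists p, q, [:: (al1, p); (be1, mxvec (outer ei b)); (al2, mxvec (outer ej a)); (be2, q)].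
split => //.
  move=> x; rewrite !inE => /or4P [] /eqP -> //=; try by move=> C _ _ Cp _.

rewrite !big_cons big_nil addr0 /= /p /q -!linearZ -!linearD /=; congr mxvec.
by apply/matrixP => r c; rewrite E1 E2 !mxE; ring.
Qed.

End Segre.


Section SegreAll.
Variable K : fieldType.

Lemma eq_inord n (a : nat) (r : 'I_n.+1) : (a <= n)%N -> (r == inord a) = (val r == a).
Proof. by move=> Ha; rewrite -val_eqE /= inordK ?ltnS. Qed.

Lemma segre_all l k (v : 'rV[K]_(l.+1 * k.+1)) : (1 <= l <= 3)%N -> (1 <= k)%N ->
  exists p1 q1 p2 q2, [/\ dist2 (@segre K l k) p1 q1, dist2 (@segre K l k) p2 q2 &
     in_span (fun w => convex_closure (@segre K l k) p1 q1 w \/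
                       convex_closure (@segre K l k) p2 q2 w) v].
Proof.
move=> Hl Hk.
set M := vec_mx v.
have Mr : forall r c, M r c = M (inord (val r)) c by move=> r c; rewrite inord_val.
set R := fun a : nat => \row_c M (inord a) c.
have RE : forall a c, R a 0 c = M (inord a) c by move=> a c; rewrite mxE.
have Hv : v = mxvec M by rewrite vec_mxK.
case: l v Hl M Mr R RE Hv => [//|[|[|[|//]]]] v _ M Mr R RE Hv.
- have E : v = mxvec (outer (delta_mx 0 (inord 0)) (R 0%N) + outer (delta_mx 0 (inord 1)) (R 1%N))
             + mxvec (outer (delta_mx 0 (inord 0)) 0 + outer (delta_mx 0 (inord 1)) 0).
    rewrite Hv -linearD /=; congr mxvec; apply/matrixP => r c.
    rewrite Mr !mxE !eq_inord // !RE; case: r => [[|[|//]] Hr] /=; ring.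
  rewrite E; apply: combine; apply: segre_grid => //; by rewrite -val_eqE /= !inordK.
- have E : v = mxvec (outer (delta_mx 0 (inord 0)) (R 0%N) + outer (delta_mx 0 (inord 1)) (R 1%N))
             + mxvec (outer (delta_mx 0 (inord 2)) (R 2%N) + outer (delta_mx 0 (inord 0)) 0).
    rewrite Hv -linearD /=; congr mxvec; apply/matrixP => r c.
    rewrite Mr !mxE !eq_inord // !RE; case: r => [[|[|[|//]]] Hr] /=; ring.
  rewrite E; apply: combine; apply: segre_grid => //; by rewrite -val_eqE /= !inordK.
- have E : v = mxvec (outer (delta_mx 0 (inord 0)) (R 0%N) + outer (delta_mx 0 (inord 1)) (R 1%N))
             + mxvec (outer (delta_mx 0 (inord 2)) (R 2%N) + outer (delta_mx 0 (inord 3)) (R 3%N)).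
    rewrite Hv -linearD /=; congr mxvec; apply/matrixP => r c.
    rewrite Mr !mxE !eq_inord // !RE; case: r => [[|[|[|[|//]]]] Hr] /=; ring.
  rewrite E; apply: combine; apply: segre_grid => //; by rewrite -val_eqE /= !inordK.
Qed.

End SegreAll.


Definition wm (K : fieldType) n (u w : 'rV[K]_n) : 'M[K]_n :=
  \matrix_(i, j) (u 0 i * w 0 j - w 0 i * u 0 j).

Definition plu (K : fieldType) n (Z : 'M[K]_n) i j k l :=
  Z i j * Z k l - Z i k * Z j l + Z i l * Z j k.

Section Grass.
Variables (K : fieldType) (m : nat).
Notation G := (@grass K m).

Lemma wm_tr (u w : 'rV[K]_m) : u^T *m w - w^T *m u = wm u w.
Proof. by apply/matrixP => i j; rewrite !mxE !big_ord1 !mxE. Qed.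

Lemma grass_wm (u w : 'rV[K]_m) : wm u w != 0 -> G (mxvec (wm u w)).
Proof. by move=> H; exists u, w; rewrite mxvecK wm_tr. Qed.

Lemma grass_inv v : G v -> exists u w : 'rV[K]_m, vec_mx v = wm u w.
Proof. by move=> [u [w [_ E]]]; exists u, w; rewrite E wm_tr. Qed.

Lemma grass_sc : sc G.
Proof.
move=> v a [u [w [Hn E]]] Ha; rewrite wm_tr in Hn E.
have E2 : a *: wm u w = wm (a *: u) w by apply/matrixP => i j; rewrite !mxE; ring.
exists (a *: u), w; rewrite wm_tr -E2 linearZ /= E; split => //.
by rewrite scaler_eq0 negb_or Ha.
Qed.

Lemma mv_anti (u w : 'rV[K]_m) : mxvec (wm u w) = - mxvec (wm w u).
Proof. rewrite -linearN /=; congr mxvec; apply/matrixP => i j; rewrite !mxE; ring. Qed.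

Lemma wm_nz_sym (u w : 'rV[K]_m) : wm u w != 0 -> wm w u != 0.
Proof.
apply: contra => /eqP H; apply/eqP; apply/matrixP => i j.
move/matrixP: H => /(_ i j); rewrite !mxE => H; rewrite -[RHS]oppr0 -H; ring.
Qed.

Lemma col_wm_l (u w1 w2 : 'rV[K]_m) : wm u w1 != 0 -> wm u w2 != 0 ->
  collinear G (mxvec (wm u w1)) (mxvec (wm u w2)).
Proof.
move=> H1 H2.
apply: (@col_lin _ _ _ _ (fun w => mxvec (wm u w))); try exact: mxvec_nz.
  move=> a b y z; exists (a *: y + b *: z).
  rewrite -!linearZ -linearD /=; congr mxvec; apply/matrixP => i j; rewrite !mxE; ring.
by move=> z Hz; apply: grass_wm; apply: contra Hz => /eqP ->; rewrite linear0.
Qed.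

Lemma col_wm_r (u1 u2 w : 'rV[K]_m) : wm u1 w != 0 -> wm u2 w != 0 ->
  collinear G (mxvec (wm u1 w)) (mxvec (wm u2 w)).
Proof.
move=> H1 H2; rewrite (mv_anti u1) (mv_anti u2).
apply: col_neg; first exact: grass_sc.
apply: col_sym; apply: col_neg; first exact: grass_sc.
by apply: col_sym; apply: col_wm_l; apply: wm_nz_sym.
Qed.

Lemma col_wm_rl (a u b : 'rV[K]_m) : wm a u != 0 -> wm u b != 0 ->
  collinear G (mxvec (wm a u)) (mxvec (wm u b)).
Proof.
move=> H1 H2; rewrite (mv_anti a).
by apply: col_neg; first exact: grass_sc; apply: col_wm_l => //; apply: wm_nz_sym.
Qed.

Lemma plu_wm (u w : 'rV[K]_m) i j k l : plu (wm u w) i j k l = 0.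
Proof. rewrite /plu !mxE; ring. Qed.

Lemma klein (u1 w1 u2 w2 : 'rV[K]_m) :
  wm u1 w1 != 0 -> wm u2 w2 != 0 -> wm u1 u2 != 0 -> wm u1 w2 != 0 ->
  wm w1 u2 != 0 -> wm w1 w2 != 0 ->
  (exists i j k l, plu (wm u1 w1 + wm u2 w2) i j k l != 0) ->
  forall c1 c2 c3 c4 c5 c6 : K,
  gridrep G (mxvec (c1 *: wm u1 w1 + c2 *: wm u2 w2 + c3 *: wm u1 u2 + c4 *: wm u1 w2
                    + c5 *: wm w1 u2 + c6 *: wm w1 w2)).
Proof.
move=> N1 N2 N3 N4 N5 N6 [i [j [k [l Hp]]]] c1 c2 c3 c4 c5 c6.
set p := mxvec (wm u1 w1); set q := mxvec (wm u2 w2).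
have Hpq : ~ collinear G p q.
  move=> [_ [_ H]].
  have Epq : p + q = mxvec (wm u1 w1 + wm u2 w2) by rewrite /p /q -linearD.
  have HZ : wm u1 w1 + wm u2 w2 != 0 by apply: contra Hp => /eqP ->; rewrite /plu !mxE; apply/eqP; ring.
  have := H 1 1; rewrite !scale1r Epq => /(_ (mxvec_nz HZ)) /grass_inv [u [w]].
  rewrite mxvecK => EZ; move: Hp; by rewrite EZ plu_wm eqxx.
have S := grass_sc.
have [D C3] := clos_mid S Hpq (col_wm_l N1 N3) (col_wm_rl N3 N2).
have [_ C4] := clos_mid S Hpq (col_wm_l N1 N4) (col_wm_r N4 N2).
have [_ C5] := clos_mid S Hpq (col_wm_rl N1 N5) (col_wm_rl N5 N2).
have [_ C6] := clos_mid S Hpq (col_wm_rl N1 N6) (col_wm_r N6 N2).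
exists p, q, [:: (c1, p); (c2, q); (c3, mxvec (wm u1 u2)); (c4, mxvec (wm u1 w2));
                (c5, mxvec (wm w1 u2)); (c6, mxvec (wm w1 w2))].
split => //.
  move=> x; rewrite !inE => /orP [/eqP ->|/orP [/eqP ->|/orP [/eqP ->|/orP [/eqP ->|/orP [/eqP ->|/eqP ->]]]]] //=; try by move=> C _ Cp _.
by rewrite !big_cons big_nil addr0 /= /p /q -!linearZ -!linearD /= !addrA.
Qed.

End Grass.


Definition ev (K : fieldType) n (a : nat) : 'rV[K]_n := \row_j (if (j : nat) == a then 1 else 0).
Arguments ev {K} n a.

Section GrassAll.
Variable K : fieldType.

Lemma skew_span m (v : 'rV[K]_(m * m)) : in_span (@grass K m) v ->
  forall i j, vec_mx v i j = - vec_mx v j i /\ vec_mx v i i = 0.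
Proof.
move=> [n [w [c [Hw ->]]]] i j.
rewrite linear_sum /= !summxE -sumrN; split.
  apply: eq_bigr => k _; have [u [x E]] := grass_inv (Hw k).
  rewrite linearZ /= E !mxE; ring.
apply: big1 => k _; have [u [x E]] := grass_inv (Hw k).
rewrite linearZ /= E !mxE; ring.
Qed.

Lemma wm_ev_nz m (a : 'I_m) (x : 'rV[K]_m) : x 0 a = 0 -> x != 0 -> wm (ev m a) x != 0.
Proof.
move=> Ha /rV0Pn [j Hj]; apply/eqP => /matrixP /(_ a j); rewrite !mxE eqxx Ha => H.
by move: Hj; rewrite -[x 0 j]mulr1 mulrC; apply/negP; rewrite negbK; apply/eqP;
   rewrite -[RHS]H; ring.
Qed.

End GrassAll.


Section G6.
Variable K : fieldType.

Lemma ne1 (x : K) : x = 1 -> x != 0.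
Proof. by move=> ->; rewrite oner_eq0. Qed.

Ltac nz_entry i j :=
  apply/eqP => /matrixP /(_ i j) /eqP; rewrite !mxE /=; apply/negP;
  rewrite ?mul1r ?mulr1 ?mul0r ?mulr0 ?subr0 ?sub0r ?oppr_eq0 ?oner_eq0 //.

Lemma grass_all6 (v : 'rV[K]_(6 * 6)) : in_span (@grass K 6) v ->
  exists p1 q1 p2 q2, [/\ dist2 (@grass K 6) p1 q1, dist2 (@grass K 6) p2 q2 &
     in_span (fun w => convex_closure (@grass K 6) p1 q1 w \/
                       convex_closure (@grass K 6) p2 q2 w) v].
Proof.
move=> Hv.
have Sk := skew_span Hv.
set A := vec_mx v.
pose B := fun a b : nat => A (inord a) (inord b).
have Bc : forall i j : 'I_6, A i j =
    if (i < j)%N then B i j else if (i == j :> nat) then 0 else - B j i.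
  move=> i j; rewrite /B !inord_val.
  case: ltngtP => // [Hij|].
    by rewrite (Sk j i).1 opprK.
  by move=> /val_inj ->; rewrite (Sk j j).2.
pose e a := @ev K 6 a.
pose f : 'rV[K]_6 := \row_j (if (j < 4)%N then - B j 4%N else 0).
pose h : 'rV[K]_6 := \row_j (if (j < 4)%N then - B j 5%N else 0).
have E1 : A = (B 0 1 *: wm (e 0) (e 1) + B 2 3 *: wm (e 2) (e 3) + B 0 2 *: wm (e 0) (e 2)
     + B 0 3 *: wm (e 0) (e 3) + B 1 2 *: wm (e 1) (e 2) + B 1 3 *: wm (e 1) (e 3))
    + (B 4 5 *: wm (e 4) (e 5) + wm (e 4) f + wm (e 5) h).
  apply/matrixP => i j; rewrite Bc !mxE.
  by case: i => [[|[|[|[|[|[|//]]]]]] Hi]; case: j => [[|[|[|[|[|[|//]]]]]] Hj] /=; ring.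
pose P := fun x : 'rV[K]_6 => forall j : 'I_6, (4 <= j)%N -> x 0 j = 0.
have PS : forall x (a : K), P x -> P (a *: x).
  by move=> x a Px j Hj; rewrite mxE Px ?mulr0.
have Pf : P f by move=> j Hj; rewrite mxE ltnNge Hj.
have Ph : P h by move=> j Hj; rewrite mxE ltnNge Hj.
have Pe : forall a, (a < 4)%N -> P (e a).
  move=> a Ha j Hj; rewrite mxE; case: eqP => // E; by move: Hj; rewrite E leqNgt Ha.
have I01 : indep (e 0) (e 1).
  move=> x y /matrixP E; split.
    by move: (E 0 (@Ordinal 6 0 isT)); rewrite !mxE /=; rewrite mulr1 mulr0 addr0.
  by move: (E 0 (@Ordinal 6 1 isT)); rewrite !mxE /=; rewrite mulr1 mulr0 add0r.
have [g [hh [al1 [be1 [al2 [be2 [Igh Pg Phh Ef Eh]]]]]]] :=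
  lemL PS (Pe 0%N isT) (Pe 1%N isT) Pf Ph I01.
have E2 : A = (B 0 1 *: wm (e 0) (e 1) + B 2 3 *: wm (e 2) (e 3) + B 0 2 *: wm (e 0) (e 2)
     + B 0 3 *: wm (e 0) (e 3) + B 1 2 *: wm (e 1) (e 2) + B 1 3 *: wm (e 1) (e 3))
    + (B 4 5 *: wm (e 4) (e 5) + 0 *: wm g hh + al1 *: wm (e 4) g + be1 *: wm (e 4) hh
       + al2 *: wm (e 5) g + be2 *: wm (e 5) hh).
  rewrite {1}E1; congr (_ + _); rewrite Ef Eh.
  by apply/matrixP => i j; rewrite !mxE; ring.
have -> : v = mxvec A by rewrite vec_mxK.
rewrite E2 linearD /=; apply: combine.
  pose o0 := @Ordinal 6 0 isT; pose o1 := @Ordinal 6 1 isT; pose o2 := @Ordinal 6 2 isT.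
  pose o3 := @Ordinal 6 3 isT.
  apply: klein; [nz_entry o0 o1 | nz_entry o2 o3 | nz_entry o0 o2 | nz_entry o0 o3
                | nz_entry o1 o2 | nz_entry o1 o3 | ].
  exists o0, o1, o2, o3; rewrite /plu !mxE /=.
  by apply: ne1; ring.
have Hg := indep_nz1 Igh; have Hh := indep_nz2 Igh.
pose o4 := @Ordinal 6 4 isT; pose o5 := @Ordinal 6 5 isT.
have [i [j Hm]] := minor_nz Igh.
have Hi : (i < 4)%N.
  rewrite ltnNge; apply/negP => Hi; move: Hm; rewrite (Pg i Hi) (Phh i Hi).
  by rewrite !mul0r mulr0 subrr eqxx.
have Hj : (j < 4)%N.
  rewrite ltnNge; apply/negP => Hj; move: Hm; rewrite (Pg j Hj) (Phh j Hj).
  by rewrite !mulr0 mul0r subrr eqxx.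
apply: klein.
- by nz_entry o4 o5.
- apply/eqP => /matrixP /(_ i j); rewrite !mxE => H; move/eqP: Hm; apply.
  by rewrite -[RHS]H; ring.
- exact: (@wm_ev_nz K 6 o4 g (Pg o4 isT) Hg).
- exact: (@wm_ev_nz K 6 o4 hh (Phh o4 isT) Hh).
- exact: (@wm_ev_nz K 6 o5 g (Pg o5 isT) Hg).
- exact: (@wm_ev_nz K 6 o5 hh (Phh o5 isT) Hh).
have i4 : ((i : nat) == 4) = false by apply/eqP; lia.
have i5 : ((i : nat) == 5) = false by apply/eqP; lia.
have j4 : ((j : nat) == 4) = false by apply/eqP; lia.
have j5 : ((j : nat) == 5) = false by apply/eqP; lia.
exists o4, o5, i, j; rewrite /plu !mxE /= i4 i5 j4 j5.
rewrite (Pg o4 isT) (Pg o5 isT) (Phh o4 isT) (Phh o5 isT).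
move: Hm; apply: contra => /eqP H; apply/eqP; rewrite -[RHS]H; ring.
Qed.

Lemma klein2_5 (F : 'rV[K]_5) :
  F 0 (@Ordinal 5 0 isT) = 0 -> F 0 (@Ordinal 5 1 isT) = 0 -> F 0 (@Ordinal 5 4 isT) = 0 ->
  F != 0 -> forall c1 c3 c : K,
  gridrep (@grass K 5) (mxvec (c1 *: wm (@ev K 5 4) (ev 5 0) + 0 *: wm (ev 5 1) F
     + c3 *: wm (ev 5 4) (ev 5 1) + c *: wm (ev 5 4) F + 0 *: wm (ev 5 0) (ev 5 1)
     + 0 *: wm (ev 5 0) F)).
Proof.
move=> F0 F1 F4 Fn c1 c3 c.
pose o0 := @Ordinal 5 0 isT; pose o1 := @Ordinal 5 1 isT; pose o4 := @Ordinal 5 4 isT.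
have /rV0Pn [j Hj] := Fn.
have j0 : ((j : nat) == 0) = false.
  apply/negP => /eqP E; move: Hj; have -> : j = o0 by apply: val_inj.
  by rewrite F0 eqxx.
have j1 : ((j : nat) == 1) = false.
  apply/negP => /eqP E; move: Hj; have -> : j = o1 by apply: val_inj.
  by rewrite F1 eqxx.
have j4 : ((j : nat) == 4) = false.
  apply/negP => /eqP E; move: Hj; have -> : j = o4 by apply: val_inj.
  by rewrite F4 eqxx.
apply: klein.
- by nz_entry o4 o0.
- exact: (@wm_ev_nz K 5 o1 F F1 Fn).
- by nz_entry o4 o1.
- exact: (@wm_ev_nz K 5 o4 F F4 Fn).
- by nz_entry o0 o1.
- exact: (@wm_ev_nz K 5 o0 F F0 Fn).
exists o4, o0, o1, j; rewrite /plu !mxE /= j0 j1 j4 F0 F1 F4.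
move: Hj; apply: contra => /eqP H; apply/eqP; rewrite -[RHS]H; ring.
Qed.

Lemma grass_all5 (v : 'rV[K]_(5 * 5)) : in_span (@grass K 5) v ->
  exists p1 q1 p2 q2, [/\ dist2 (@grass K 5) p1 q1, dist2 (@grass K 5) p2 q2 &
     in_span (fun w => convex_closure (@grass K 5) p1 q1 w \/
                       convex_closure (@grass K 5) p2 q2 w) v].
Proof.
move=> Hv.
have Sk := skew_span Hv.
set A := vec_mx v.
pose B := fun a b : nat => A (inord a) (inord b).
have Bc : forall i j : 'I_5, A i j =
    if (i < j)%N then B i j else if (i == j :> nat) then 0 else - B j i.
  move=> i j; rewrite /B !inord_val.
  case: ltngtP => // [Hij|].
    by rewrite (Sk j i).1 opprK.
  by move=> /val_inj ->; rewrite (Sk j j).2.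
pose e a := @ev K 5 a.
pose F' : 'rV[K]_5 := \row_j (if ((j : nat) == 2) || ((j : nat) == 3) then - B j 4%N else 0).
have E1 : A = (B 0 1 *: wm (e 0) (e 1) + B 2 3 *: wm (e 2) (e 3) + B 0 2 *: wm (e 0) (e 2)
     + B 0 3 *: wm (e 0) (e 3) + B 1 2 *: wm (e 1) (e 2) + B 1 3 *: wm (e 1) (e 3))
    + ((- B 0 4) *: wm (e 4) (e 0) + (- B 1 4) *: wm (e 4) (e 1) + wm (e 4) F').
  apply/matrixP => i j; rewrite Bc !mxE.
  by case: i => [[|[|[|[|[|//]]]]] Hi]; case: j => [[|[|[|[|[|//]]]]] Hj] /=; ring.
have [F [c [F0 F1 F4 Fn EF]]] : exists (F : 'rV[K]_5) (c : K), [/\ F 0 (@Ordinal 5 0 isT) = 0,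
    F 0 (@Ordinal 5 1 isT) = 0, F 0 (@Ordinal 5 4 isT) = 0, F != 0 &
    wm (e 4) F' = c *: wm (e 4) F].
  case: (eqVneq F' 0) => HF.
    exists (e 2), 0; split; try by rewrite mxE.
      by apply/eqP => /matrixP /(_ 0 (@Ordinal 5 2 isT)) /eqP; rewrite !mxE /= oner_eq0.
    by rewrite HF scale0r; apply/matrixP => i j; rewrite !mxE; ring.
  by exists F', 1; rewrite scale1r; split => //; rewrite mxE.
have E2 : A = (B 0 1 *: wm (e 0) (e 1) + B 2 3 *: wm (e 2) (e 3) + B 0 2 *: wm (e 0) (e 2)
     + B 0 3 *: wm (e 0) (e 3) + B 1 2 *: wm (e 1) (e 2) + B 1 3 *: wm (e 1) (e 3))
    + ((- B 0 4) *: wm (e 4) (e 0) + 0 *: wm (e 1) F + (- B 1 4) *: wm (e 4) (e 1)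
       + c *: wm (e 4) F + 0 *: wm (e 0) (e 1) + 0 *: wm (e 0) F).
  by rewrite {1}E1 EF; apply/matrixP => i j; rewrite !mxE; ring.
have -> : v = mxvec A by rewrite vec_mxK.
rewrite E2 linearD /=; apply: combine; last exact: klein2_5.
pose o0 := @Ordinal 5 0 isT; pose o1 := @Ordinal 5 1 isT; pose o2 := @Ordinal 5 2 isT.
pose o3 := @Ordinal 5 3 isT.
apply: klein; [nz_entry o0 o1 | nz_entry o2 o3 | nz_entry o0 o2 | nz_entry o0 o3
              | nz_entry o1 o2 | nz_entry o1 o3 | ].
exists o0, o1, o2, o3; rewrite /plu !mxE /=.
by apply: ne1; ring.
Qed.

End G6.

Theorem proposition3p8 (K : fieldType) :
  (forall l k : nat, (1 <= l <= 3)%N -> (1 <= k)%N ->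
     forall S : 'M[K]_(l.+1 * k.+1),
       (forall v, (v <= S)%MS -> in_span (@segre K l k) v) ->
       legal (@segre K l k) S -> S = 0)
  /\
  (forall m : nat, (m = 5 \/ m = 6)%N ->
     forall S : 'M[K]_(m * m),
       (forall v, (v <= S)%MS -> in_span (@grass K m) v) ->
       legal (@grass K m) S -> S = 0).
Proof.
split.
  move=> l k Hl Hk S _ HL; apply: (legal_zero (X := @segre K l k)) HL => v _.
  exact: segre_all.
move=> m Hm S HS HL; case: Hm => Em; subst m;
  apply: (legal_zero (X := @grass K _)) HL => v Hv.
  exact: grass_all5 (HS v Hv).
exact: grass_all6 (HS v Hv).
Qed.
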